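(* Let $k,r,p>0$ be integers and let $F:\mathbb{N}^k\to\mathbb{N}^r$ satisfy $|F(x)|\le \min(x)$ for all $x\in\mathbb{N}^k$. Then there exists a set $E\subseteq\mathbb{N}$ with $|E|=p$ such that $|F[E^k]|\le k^k\,p$, where $F[E^k]=\{F(x):x\in E^k\}$.
   Context: $\mathbb{N}=\{0,1,2,\dots\}$. For $x=(x_1,\dots,x_k)\in\mathbb{N}^k$, $\min(x)$ is the minimum coordinate of $x$ and $|x|$ is the maximum coordinate of $x$ (sup norm). For a finite set $S$, $|S|$ denotes its cardinality. *)

(* Defs.v *)
From mathcomp Require Import all_boot all_order.
From mathcomp Require Import finmap.
Set Implicit Arguments. Unset Strict Implicit. Unset Printing Implicit Defensive.
Local Open Scope fset_scope.

Definition vnorm (k : nat) (x : {ffun 'I_k -> nat}) : nat := \max_(i < k) x i.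

(* min(x) = minimum coordinate (only meaningful for k > 0; 0 when k = 0) *)
Definition vmin (k : nat) (x : {ffun 'I_k -> nat}) : nat :=
  foldr minn (head 0 (codom x)) (codom x).

Definition cube (k : nat) (E : {fset nat}) : seq {ffun 'I_k -> nat} :=
  [seq [ffun i => val (g i)] | g : {ffun 'I_k -> E}].

Definition image_cube (k r : nat) (F : {ffun 'I_k -> nat} -> {ffun 'I_r -> nat})
  (E : {fset nat}) : {fset {ffun 'I_r -> nat}} :=
  [fset F x | x in cube k E].

(* Main.v *)
Require Import Defs.
From mathcomp Require Import all_boot all_order finmap zify.
From Stdlib Require Import IndefiniteDescription Classical.
Set Implicit Arguments. Unset Strict Implicit. Unset Printing Implicit Defensive.

Definition infinite (A : nat -> Prop) := forall n, exists m, n < m /\ A m.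
Definition subsetn (A : nat -> Prop) n (s : seq nat) :=
  [/\ sorted ltn s, size s = n & forall x, x \in s -> A x].

Lemma pigeon (C : finType) (f : nat -> C) :
  exists c0, forall n, exists i, n <= i /\ f i = c0.
Proof.
apply: NNPP => H.
have H1 : forall c0, exists n, forall i, n <= i -> f i <> c0.
  move=> c0; apply: NNPP => H2; apply: H; exists c0 => n.
  apply: NNPP => H3; apply: H2; exists n => i hi hfi; apply: H3; by exists i.
have H2 : forall l : seq C, exists N, forall c, c \in l -> forall i, N <= i -> f i <> c.
  elim=> [|c l [N HN]]; first by exists 0.
  have [M HM] := H1 c.
  exists (maxn N M) => c'; rewrite inE => /orP [/eqP ->|hc] i hi.
    by apply: HM; apply: leq_trans hi; rewrite leq_maxr.
  by apply: HN => //; apply: leq_trans hi; rewrite leq_maxl.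
have [N HN] := H2 (index_enum C).
by apply: (HN (f N)) (leqnn N) _.
Qed.

Definition St := {A : nat -> Prop | infinite A}.

Lemma iterate (P : nat -> (nat -> Prop) -> Prop) (A0 : nat -> Prop) :
  infinite A0 ->
  (forall A, infinite A -> exists a B, A a /\ (forall x, B x -> A x /\ a < x)
        /\ infinite B /\ P a B) ->
  exists (a : nat -> nat) (S : nat -> nat -> Prop),
    (forall i x, S i x -> A0 x) /\ (forall i, S i (a i)) /\
    (forall i x, S i.+1 x -> S i x /\ a i < x) /\ (forall i, P (a i) (S i.+1)).
Proof.
move=> hA0 hstep.
have step : forall T : St, {a : nat & {B : St | sval T a /\
   (forall x, sval B x -> sval T x /\ a < x) /\ P a (sval B)}}.
  move=> [A hA] /=.
  have ha : exists ab : nat * St, A ab.1 /\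
      (forall x, sval ab.2 x -> A x /\ ab.1 < x) /\ P ab.1 (sval ab.2).
    have [a [B [h1 [h2 [h3 h4]]]]] := hstep A hA.
    by exists (a, exist _ B h3).
  case: (constructive_indefinite_description _ ha) => [[a B] hab].
  by exists a, B.
pose S := fix S i := match i with 0 => exist _ A0 hA0 : St
   | i'.+1 => sval (projT2 (step (S i'))) end.
exists (fun i => projT1 (step (S i))), (fun i => sval (S i)).
have h1 : forall i, let: existT a (exist B hB) := step (S i) in
   sval (S i) a /\ (forall x, sval B x -> sval (S i) x /\ a < x) /\ P a (sval B).
  by move=> i; case: (step (S i)) => a [B hB].
split; [|split; [|split]].
- elim=> [//|i IH] x /=; move: (h1 i); case: (step (S i)) => a [B hB] /= [_ [hB2 _]].
  by move=> /hB2 [/IH].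
- by move=> i; move: (h1 i); case: (step (S i)) => a [B hB] /= [].
- by move=> i x /=; move: (h1 i); case: (step (S i)) => a [B hB] /= [_ [hB2 _]] /hB2.
- by move=> i /=; move: (h1 i); case: (step (S i)) => a [B hB] /= [_ [_ ]].
Qed.

Lemma infinite_above (A : nat -> Prop) a : infinite A -> infinite (fun x => A x /\ a < x).
Proof.
move=> hA n; have [m [hm Am]] := hA (maxn n a).
exists m; split; [|split] => //; apply: leq_ltn_trans hm.
  by rewrite leq_maxl. by rewrite leq_maxr.
Qed.

Lemma ramsey n : forall (C : finType) (c : seq nat -> C) (A : nat -> Prop), infinite A ->
  exists (B : nat -> Prop) col, (forall x, B x -> A x) /\ infinite B /\
    forall s, subsetn B n s -> c s = col.
Proof.
elim: n => [|n IH] C c A hA.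
  exists A, (c [::]); split=> //; split=> // s [_ /size0nil -> _] //.
have [a [S [hSA [hSa [hSS hP]]]]] := @iterate
  (fun a B => exists col, forall s, subsetn B n s -> c (a :: s) = col) A hA
  (fun A' hA' => let: ex_intro a (conj _ Aa) := hA' 0 in
     let: ex_intro B (ex_intro col (conj h1 (conj h2 h3))) :=
        IH C (fun s => c (a :: s)) _ (infinite_above a hA') in
     ex_intro _ a (ex_intro _ B (conj Aa (conj h1 (conj h2 (ex_intro _ col h3)))))).
pose colf i := sval (constructive_indefinite_description _ (hP i)).
have hcol i : forall s, subsetn (S i.+1) n s -> c (a i :: s) = colf i.
  by rewrite /colf; case: (constructive_indefinite_description _ _).
have [c0 hc0] := pigeon colf.
have amono : forall i, a i < a i.+1 by move=> i; have [] := hSS i _ (hSa i.+1).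
have alt : {homo a : i j / i < j} by apply: homo_ltn => //; exact: ltn_trans.
have age : forall i, i <= a i.
  by elim=> // i IH'; apply: leq_ltn_trans IH' (amono i).
have nest : forall i j x, i < j -> S j x -> S i.+1 x.
  move=> i; elim=> // j IHj x; rewrite ltnS leq_eqVlt => /orP [/eqP <- //|hij] hx.
  by apply: IHj hij _; have [] := hSS j x hx.
exists (fun x => exists i, x = a i /\ colf i = c0), c0.
split; [|split].
- by move=> x [i [-> _]]; apply: (hSA i); apply: hSa.
- move=> m; have [i [hi hci]] := hc0 m.+1.
  by exists (a i); split; [apply: leq_trans hi (age i)| exists i].
- case=> [[_ //]|y t [hs hsz hB]]; have [i [ey hci]] := hB y (mem_head _ _).
  rewrite -hci ey; apply: hcol; split.
  + by move: hs => /path_sorted.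
  + by case: hsz.
  + move=> z hz; have [j [ez _]] := hB z (mem_behead (s:=y::t) hz).
    move: hs; rewrite /= path_sortedE; last exact: ltn_trans.
    case/andP => /allP /(_ z hz); rewrite ey ez => hlt0 _; have hlt : a i < a j := hlt0.
    have hij : i < j.
      rewrite ltnNge; apply/negP => hji.
      move: hji; rewrite leq_eqVlt => /orP [/eqP e|/alt h].
        by move: hlt; rewrite e ltnn.
      by have := ltn_trans hlt h; rewrite ltnn.
    by apply: (nest i j) => //; apply: hSa.
Qed.

Lemma vmin_le n (x : {ffun 'I_n -> nat}) i : vmin x <= x i.
Proof.
rewrite /vmin; have : x i \in codom x by apply: codom_f.
elim: (codom x) (head 0 (codom x)) => // y l IH d; rewrite inE => /orP [/eqP <-|h] /=.
  by rewrite geq_minl.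
by rewrite geq_min IH ?orbT.
Qed.

Lemma vnorm_ge n (y : {ffun 'I_n -> nat}) i : y i <= vnorm y.
Proof. exact: (leq_bigmax (F := fun i => y i)). Qed.

Lemma iter_facts (a : nat -> nat) (S : nat -> nat -> Prop) :
  (forall i, S i (a i)) -> (forall i x, S i.+1 x -> S i x /\ a i < x) ->
  [/\ {homo a : i j / i < j}, forall i j, a i < a j -> i < j,
      forall i j x, i < j -> S j x -> S i.+1 x & forall i, infinite (S i.+1)].
Proof.
move=> hSa hSS.
have amono : forall i, a i < a i.+1 by move=> i; have [] := hSS i _ (hSa i.+1).
have alt : {homo a : i j / i < j} by apply: homo_ltn => //; exact: ltn_trans.
have age : forall i, i <= a i.
  by elim=> // i IH'; apply: leq_ltn_trans IH' (amono i).
have nest : forall i j x, i < j -> S j x -> S i.+1 x.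
  move=> i; elim=> // j IHj x; rewrite ltnS leq_eqVlt => /orP [/eqP <- //|hij] hx.
  by apply: IHj hij _; have [] := hSS j x hx.
split=> //.
- move=> i j hlt; rewrite ltnNge; apply/negP; rewrite leq_eqVlt => /orP [/eqP e|/alt h].
    by move: hlt; rewrite e ltnn.
  by have := ltn_trans hlt h; rewrite ltnn.
- move=> i m; exists (a (maxn m i).+1); split.
    by apply: leq_trans (age _); rewrite ltnS leq_maxl.
  by apply: (nest i (maxn m i).+1); [rewrite ltnS leq_maxr | apply: hSa].
Qed.

Lemma exists_subsetn (B : nat -> Prop) : infinite B -> forall n m,
  exists s, subsetn B n s /\ forall y, y \in s -> m < y.
Proof.
move=> hB; elim=> [|n IH] m; first by exists [::].
have [y [hy By]] := hB m.
have [s [[hs hsz hsB] hsy]] := IH y.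
exists (y :: s); split; [split|].
- by rewrite /= path_sortedE; [rewrite hs andbT; apply/allP | exact: ltn_trans].
- by rewrite /= hsz.
- by move=> z; rewrite inE => /orP [/eqP ->|/hsB].
- move=> z; rewrite inE => /orP [/eqP ->//|/hsy]; exact: ltn_trans.
Qed.

Local Open Scope fset_scope.

Theorem theorem0p1 (k r p : nat) (hk : 0 < k) (hr : 0 < r) (hp : 0 < p)
  (F : {ffun 'I_k -> nat} -> {ffun 'I_r -> nat})
  (hF : forall x, vnorm (F x) <= vmin x) :
  exists E : {fset nat}, #|` E| = p /\ #|` image_cube F E| <= k ^ k * p.
Proof.
case: k hk F hF => // k' _ F hF.
pose T := {ffun 'I_k'.+1 -> 'I_k'.+1}.
pose xg h s (g : T) : {ffun 'I_k'.+1 -> nat} := [ffun i => nth 0 (h :: s) (g i)].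
pose P h (B : nat -> Prop) := forall s s' (g : T), subsetn B k' s -> subsetn B k' s' ->
   (exists i, val (g i) = 0) -> F (xg h s g) = F (xg h s' g).
have hstep : forall A, infinite A -> exists h B, A h /\ (forall x, B x -> A x /\ h < x)
        /\ infinite B /\ P h B.
  move=> A hA; have [h [_ Ah]] := hA 0.
  have [B [col [hBA [hB hc]]]] := ramsey k'
     (fun s => [ffun g : T => [ffun i => (inord (F (xg h s g) i) : 'I_h.+1)]])
     (infinite_above h hA).
  exists h, B; split=> //; split=> //; split=> // s s' g hs hs' [i0 hi0].
  have := hc s hs; rewrite -(hc s' hs') => /ffunP /(_ g); rewrite !ffunE => /ffunP e.
  have bnd : forall s, F (xg h s g) =1 fun i => F (xg h s g) i.
    by [].
  apply/ffunP => i; move: (e i); rewrite !ffunE.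
  have hb : forall s, F (xg h s g) i < h.+1.
    move=> s0; rewrite ltnS; apply: leq_trans (vnorm_ge _ i) _.
    apply: leq_trans (hF _) _; apply: leq_trans (vmin_le _ i0) _.
    by rewrite ffunE hi0.
  move/(congr1 (@nat_of_ord _)) => e1.
  have e2 := inordK (hb s); have e3 := inordK (hb s').
  by rewrite e2 e3 in e1.
have hT : infinite (fun _ => True) by move=> n; exists n.+1.
have [a [S [_ [hSa [hSS hP]]]]] := iterate hT hstep.
have [alt altr nest Sinf] := iter_facts hSa hSS.
have s0 : forall j, {s | subsetn (S j.+1) k' s}.
  move=> j; apply: constructive_indefinite_description.
  by have [s [hs _]] := exists_subsetn (Sinf j) k' 0; exists s.
pose Phi (z : 'I_p * T) := F (xg (a z.1) (sval (s0 z.1)) z.2).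
pose E := [fset x in [seq a i | i <- iota 0 p]].
have memE : forall y, y \in E -> exists2 l, l < p & y = a l.
  move=> y; rewrite inE => /mapP [l]; rewrite mem_iota add0n => hl ->.
  by exists l.
have key : forall x : {ffun 'I_k'.+1 -> nat}, (forall i, x i \in E) ->
   exists z, F x = Phi z.
  move=> x hxE.
  case: (@arg_minnP _ ord0 xpredT (fun i => x i)) => // i0 _ hmin.
  have [j hj exj] := memE _ (hxE i0).
  pose V := [seq a l | l <- iota j.+1 (p - j.+1) & a l \in codom x].
  have memV : forall y, y \in V -> exists l, [/\ j < l, l < p, y = a l & y \in codom x].
    move=> y /mapP [l]; rewrite mem_filter mem_iota => /andP [hc /andP [h1 h2]] ->.
    by exists l; split => //; move: h2; rewrite subnKC.
  have sortV : sorted ltn V.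
    apply: (homo_sorted alt); apply: sorted_filter; [exact: ltn_trans | exact: iota_ltn_sorted].
  have uV : uniq V := sorted_uniq ltn_trans ltnn sortV.
  have subV : {subset V <= [seq y <- codom x | a j < y]}.
    move=> y /memV [l [hl _ -> hc]]; rewrite mem_filter hc andbT; exact: alt.
  have hV : size V <= k'.
    have := uniq_leq_size uV subV; rewrite size_filter.
    have hc : 0 < count (predC (fun y => a j < y)) (codom x).
      rewrite -has_count; apply/hasP; exists (x i0); first exact: codom_f.
      by rewrite /= exj ltnn.
    have := count_predC (fun y => a j < y) (codom x); rewrite size_codom card_ord.
    move=> e1 e2; have h3 : count (fun y => a j < y) (codom x) < k'.+1.
      by rewrite -[X in _ < X]e1 -{1}(addn0 (count _ _)) ltn_add2l.
    by apply: leq_trans e2 _; rewrite -ltnS.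
  have [t [[st szt tS] tgt]] := exists_subsetn (Sinf j) (k' - size V) (a p).
  pose s := V ++ t.
  have ps : path ltn (a j) s.
    rewrite cat_path; apply/andP; split.
      rewrite path_sortedE; last exact: ltn_trans.
      rewrite sortV andbT; apply/allP => y /memV [l [hl _ -> _]]; exact: alt.
    rewrite path_sortedE; last exact: ltn_trans.
    rewrite st andbT; apply/allP => y /tgt hy.
    have hl : last (a j) V < a p.
      have := mem_last (a j) V; rewrite inE => /orP [/eqP ->|/memV [l [_ hl -> _]]];
        exact: alt.
    exact: ltn_trans hl hy.
  have szs : size s = k' by rewrite size_cat szt subnKC.
  have hs : subsetn (S j.+1) k' s.
    split => //; first exact: path_sorted ps.
    move=> y; rewrite mem_cat => /orP [/memV [l [hl _ -> _]]|/tS //].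
    by apply: (nest j l) => //; apply: hSa.
  have memx : forall i, x i \in a j :: s.
    move=> i; have [l hl el] := memE _ (hxE i).
    rewrite inE; case: (ltngtP l j) => hlj.
    - have := hmin i isT; rewrite exj el => h; have := alt _ _ hlj.
      by rewrite ltnNge h.
    - rewrite mem_cat; apply/orP; right; apply/orP; left.
      rewrite el; apply: map_f; rewrite mem_filter mem_iota -el codom_f /= hlj.
      by rewrite subnKC.
    - by rewrite el hlj eqxx.
  pose g : T := [ffun i => inord (index (x i) (a j :: s))].
  have hxg : xg (a j) s g = x.
    apply/ffunP => i; rewrite !ffunE inordK; first by rewrite nth_index.
    by have := memx i; rewrite -index_mem /= szs.
  have hg : exists i, val (g i) = 0.
    by exists i0; rewrite ffunE exj /= eqxx inordK.
  exists (Ordinal hj, g); rewrite /Phi /= -{1}hxg.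
  by apply: (hP j) => //; exact: (svalP (s0 j)).
exists E; split.
  rewrite card_fseq undup_id ?size_map ?size_iota //.
  rewrite map_inj_uniq ?iota_uniq //.
  by move=> i j e; case: (ltngtP i j) => // /alt; rewrite e ltnn.
apply: (@leq_trans #|` [fset y in [seq Phi z | z <- enum {: 'I_p * T}]]|).
  apply: fsubset_leq_card; apply/fsubsetP => y; rewrite /image_cube.
  case/imfsetP => x hx ->; move: hx => /=; rewrite /cube => /imageP [g0 _ ->].
  have hx : forall i, [ffun i => val (g0 i)] i \in E.
    by move=> i; rewrite ffunE; apply: fsvalP.
  have [z ->] := key _ hx.
  by rewrite inE; apply: map_f; rewrite mem_enum.
rewrite card_fseq; apply: leq_trans (size_undup _) _.
by rewrite size_map -cardE card_prod card_ffun !card_ord mulnC.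
Qed.
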